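(* A connected GSC $F=F(N,\mathcal D)$ is fragile if and only if there is a point $x\in F$ such that deleting from the labelled first Hata graph all edges labelled $x$ yields a disconnected graph.
   Context: GSC: $N\ge2$, $\mathcal D\subset\{0,\dots,N-1\}^2$ with $1<|\mathcal D|<N^2$, $\varphi_i(x)=\frac1N(x+i)$, $F$ the attractor $F=\bigcup_{i\in\mathcal D}\varphi_i(F)$. The first Hata graph $\Gamma_1$ has vertex set $\mathcal D$ and an edge between distinct $i,j$ iff $\varphi_i(F)\cap\varphi_j(F)\ne\varnothing$. In the labelled first Hata graph, an edge $\{i,j\}$ carries the label $x\in F$ iff $\varphi_i(F)\cap\varphi_j(F)=\{x\}$ (edges whose intersection is not a singleton carry no label). $F$ is fragile if there is a partition $\mathcal D=\mathcal D_1\cup\mathcal D_2$ into disjoint nonempty sets with $\big(\bigcup_{i\in\mathcal D_1}\varphi_i(F)\big)\cap\big(\bigcup_{i\in\mathcal D_2}\varphi_i(F)\big)$ a singleton. *)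

(* Defs.v *)
From HB Require Import structures.
From mathcomp Require Import all_boot all_order all_algebra.
From mathcomp Require Import all_classical all_reals all_analysis.
Set Implicit Arguments. Unset Strict Implicit. Unset Printing Implicit Defensive.
Import Order.TTheory GRing.Theory Num.Theory.
Import numFieldNormedType.Exports.
Local Open Scope classical_set_scope.
Local Open Scope ring_scope.

Definition digit (N : nat) := ('I_N * 'I_N)%type.

Definition gsc_map {R : realType} (N : nat) (i : digit N) (p : R * R) : R * R :=
  ((p.1 + (nat_of_ord i.1)%:R) / N%:R, (p.2 + (nat_of_ord i.2)%:R) / N%:R).
Arguments gsc_map {R} N i p.

(* F is the attractor of the IFS {phi_i : i in D}: the (by Hutchinson unique)
   nonempty compact set with F = \bigcup_{i in D} phi_i(F). *)
Definition is_gsc_attractor {R : realType} (N : nat) (D : {set digit N})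
    (F : set (R * R)) : Prop :=
  [/\ F !=set0, compact F &
      F = \bigcup_(i in [set i | i \in D]) (gsc_map N i @` F)].
Arguments is_gsc_attractor {R} N D F.

Definition hata_edge {R : realType} (N : nat) (F : set (R * R)) (i j : digit N) : Prop :=
  i <> j /\ (gsc_map N i @` F) `&` (gsc_map N j @` F) !=set0.
Arguments hata_edge {R} N F i j.

Definition hata_label {R : realType} (N : nat) (F : set (R * R)) (i j : digit N)
    (x : R * R) : Prop :=
  (gsc_map N i @` F) `&` (gsc_map N j @` F) = [set x].
Arguments hata_label {R} N F i j x.

Definition hata_rel_del {R : realType} (N : nat) (D : {set digit N})
    (F : set (R * R)) (x : R * R) : rel (digit N) :=
  fun i j => [&& i \in D, j \in D &
     `[< hata_edge N F i j /\ ~ hata_label N F i j x >] ].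
Arguments hata_rel_del {R} N D F x.

Definition graph_connected (T : finType) (D : {set T}) (e : rel T) : Prop :=
  forall i j, i \in D -> j \in D -> connect e i j.

Definition fragile {R : realType} (N : nat) (D : {set digit N}) (F : set (R * R)) : Prop :=
  exists D1 D2 : {set digit N},
    [/\ D1 :|: D2 = D, (forall i, i \in D1 -> i \notin D2), (0 < #|D1|)%N, (0 < #|D2|)%N &
      exists x : R * R,
        (\bigcup_(i in [set i | i \in D1]) (gsc_map N i @` F))
        `&` (\bigcup_(i in [set i | i \in D2]) (gsc_map N i @` F)) = [set x]].

Arguments fragile {R} N D F.

(* Main.v *)
Require Import Defs.
From HB Require Import structures.
From mathcomp Require Import all_boot all_order all_algebra.
From mathcomp Require Import all_classical all_reals all_analysis.
Import numFieldNormedType.Exports.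
Local Open Scope classical_set_scope.
Local Open Scope ring_scope.

Lemma gsc_cont (R : realType) N (i : digit N) : continuous (gsc_map (R:=R) N i).
Proof.
move=> p; rewrite /gsc_map.
have H1 : (fun q : R * R => (q.1 + (nat_of_ord i.1)%:R) / N%:R) @ p --> (p.1 + (nat_of_ord i.1)%:R) / N%:R.
  apply: cvgMl; apply: cvgD; [exact: cvg_fst | exact: cvg_cst].
have H2 : (fun q : R * R => (q.2 + (nat_of_ord i.2)%:R) / N%:R) @ p --> (p.2 + (nat_of_ord i.2)%:R) / N%:R.
  apply: cvgMl; apply: cvgD; [exact: cvg_snd | exact: cvg_cst].
exact: (cvg_pair H1 H2).
Qed.

Lemma U_closed {R : realType} {N} (A : {set digit N}) {F : set (R * R)} :
  compact F -> closed (\bigcup_(i in [set i | i \in A]) (gsc_map N i @` F)).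
Proof.
move=> cF; apply: closed_bigcup; first exact: finite_finset.
move=> i _; apply: compact_closed; first exact: norm_hausdorff.
apply: continuous_compact => //; apply: continuous_subspaceT; exact: gsc_cont.
Qed.

Lemma conn_closed (T : finType) (e : rel T) (A : {set T}) x y :
  (forall a b, a \in A -> e a b -> b \in A) -> connect e x y -> x \in A -> y \in A.
Proof.
move=> cl /connectP [p pth ->]; elim: p x pth => //= z p IH x /andP[exz pth] xA.
exact: IH pth (cl _ _ xA exz).
Qed.

Theorem mainTheorem11 (R : realType) (N : nat) (D : {set digit N})
    (F : set (R * R)) :
  (2 <= N)%N -> (1 < #|D|)%N -> (#|D| < N ^ 2)%N ->
  is_gsc_attractor N D F ->
  connected F ->
  (fragile N D F <->
   exists x : R * R, F x /\ ~ graph_connected D (hata_rel_del N D F x)).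
Proof.
move=> _ _ _ [F0 cF FE] conF.
have sub : forall i, i \in D -> gsc_map N i @` F `<=` F.
  by move=> i iD z Hz; rewrite FE; exists i.
split.
- case=> D1 [D2 [UD disj c1 c2 [x Hx]]].
  have xU : (\bigcup_(i in [set i | i \in D1]) (gsc_map N i @` F)
        `&` \bigcup_(i in [set i | i \in D2]) (gsc_map N i @` F)) x by rewrite Hx.
  exists x; split.
    case: xU => [[i iD1 Hi] _]; apply: (sub i) => //.
    by rewrite -UD inE iD1.
  move=> Hc.
  have [i0 i0D1] := card_gt0P c1; have [j0 j0D2] := card_gt0P c2.
  have i0D : i0 \in D by rewrite -UD inE i0D1.
  have j0D : j0 \in D by rewrite -UD inE j0D2 orbT.
  suff cl : forall a b, a \in D1 -> hata_rel_del N D F x a b -> b \in D1.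
    by have := disj _ (@conn_closed _ _ D1 i0 j0 cl (Hc _ _ i0D j0D) i0D1); rewrite j0D2.
  move=> a b aD1 /and3P[_ bD /asboolP [ed nl]].
  move: bD; rewrite -UD inE => /orP[//|bD2]; exfalso; apply: nl.
  have subI : (gsc_map N a @` F) `&` (gsc_map N b @` F) `<=` [set x].
    move=> z [za zb]; rewrite -Hx; split; [by exists a | by exists b].
  apply/seteqP; split => // z /= ->.
  case: ed => _ [w [wa wb]]; have := subI w (conj wa wb) => /= <-; by split.
- case=> x [Fx nc].
  set e := hata_rel_del N D F x.
  have : exists i j, [/\ i \in D, j \in D & ~ connect e i j].
    apply: contrapT => H; apply: nc => i j iD jD; apply: contrapT => nij.
    by apply: H; exists i, j.
  case=> i0 [j0 [i0D j0D nij]].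
  pose D1 := [set j in D | connect e i0 j].
  pose D2 := D :\: D1.
  set U1 := \bigcup_(i in [set i | i \in D1]) (gsc_map N i @` F).
  set U2 := \bigcup_(i in [set i | i \in D2]) (gsc_map N i @` F).
  have subx : U1 `&` U2 `<=` [set x].
    move=> y [[i /= iD1 [p Fp <-]] [j /= jD2 [q Fq eq]]].
    move: (iD1); rewrite inE => /andP[iD ci].
    move: (jD2); rewrite !inE => /andP[njD1 jD].
    have lab : hata_label N F i j x.
      apply: contrapT => nl.
      have eij : e i j.
        rewrite /e /hata_rel_del iD jD /=; apply/asboolP; split => //.
        split; first by move=> ij; move: njD1; rewrite -ij iD ci.
        by exists (gsc_map N i p); split; [exists p | exists q].
      by move: njD1; rewrite jD (connect_trans ci (connect1 eij)).
    have : ((gsc_map N i @` F) `&` (gsc_map N j @` F)) (gsc_map N i p).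
      by split; [exists p | exists q].
    by rewrite lab.
  exists D1, D2; split.
  + by apply/setP => k; rewrite !inE; case: (k \in D); case: (connect e i0 k).
  + by move=> k; rewrite !inE => /andP[-> ->].
  + by apply/card_gt0P; exists i0; rewrite inE i0D connect0.
  + apply/card_gt0P; exists j0; rewrite !inE j0D andbT; apply/negP; case/andP=> _; exact: nij.
  + exists x; apply/seteqP; split => // y /= ->.
    apply: contrapT => nx.
    have I0 : U1 `&` U2 = set0.
      apply/seteqP; split => // z Hz; have := subx z Hz => /= zx.
      by apply: nx; rewrite -zx.
    apply: (proj2 (connectedPn F)) conF.
    have [f0 Ff0] := F0.
    exists (fun b => if b then U2 else U1); split.
    * case.
        exists (gsc_map N j0 f0); exists j0; last by exists f0.
        by rewrite /= !inE j0D andbT; apply/negP; case/andP=> _; exact: nij.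
      exists (gsc_map N i0 f0); exists i0; last by exists f0.
      by rewrite /= inE i0D connect0.
    * rewrite {1}FE; apply/seteqP; split => z.
        case=> i /= iD Hz; case: (boolP (i \in D1)) => iD1.
          by left; exists i.
        by right; exists i => //=; rewrite inE iD1 iD.
      case=> -[i /= Hi Hz]; exists i => //=.
        by move: Hi; rewrite inE => /andP[].
      by move: Hi; rewrite inE => /andP[].
    * rewrite /separated /=.
      rewrite -(proj1 (closure_id U1) (U_closed D1 cF)) -(proj1 (closure_id U2) (U_closed D2 cF)).
      by split => //; rewrite setIC.
Qed.
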